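(* Let $\mathcal Z,\mathcal S,\mathcal U$ be finite alphabets and let $p_{ZS}$, $p_{SU}$ be joint types of length-$n$ sequences on $\mathcal Z\times\mathcal S$ and $\mathcal S\times\mathcal U$ having the same $S$-marginal $p_S$. Define the pmf $P^\star_{ZSU}(z,s,u)=p_{Z|S}(z|s)p_{SU}(s,u)$, where $p_{Z|S}(z|s)=p_{ZS}(z,s)/p_S(s)$ when $p_S(s)>0$ (and $P^\star_{ZSU}(z,s,u)=0$ when $p_S(s)=0$). Let $$\mathcal A=\Big\{p_{Z_1S_1U_1}\in\mathcal P_n(\mathcal Z\times\mathcal S\times\mathcal U):\ p_{Z_1S_1}=p_{ZS},\ p_{S_1U_1}=p_{SU},\ |p_{Z_1S_1U_1}-P^\star_{ZSU}|_\infty\le\tfrac1n\Big\}.$$ Then $P^\star_{ZSU}$ belongs to the convex hull of $\mathcal A$.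
   Context: $\mathcal P_n(\mathcal Z\times\mathcal S\times\mathcal U)$ is the set of joint types of length-$n$ sequences, i.e., pmfs all of whose entries are integer multiples of $1/n$; $p_{Z_1S_1}$, $p_{S_1U_1}$ are marginals of $p_{Z_1S_1U_1}$; $|P-Q|_\infty=\max|P(\cdot)-Q(\cdot)|$. The convex hull of a finite set of vectors is the set of all their convex combinations. *)

(* Defs.v *)
From HB Require Import structures.
From mathcomp Require Import all_boot all_order all_algebra.
Set Implicit Arguments. Unset Strict Implicit. Unset Printing Implicit Defensive.
Import Order.TTheory GRing.Theory Num.Theory.
Local Open Scope ring_scope.

Section Defs.
Variable R : realFieldType.

Definition is_type (T : finType) (n : nat) (p : {ffun T -> R}) : Prop :=
  (forall t, exists k : nat, p t = k%:R / n%:R) /\ \sum_(t : T) p t = 1.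

Variables Z S U : finType.

Definition margS_ZS (p : {ffun Z * S -> R}) (s : S) : R := \sum_(z : Z) p (z, s).
Definition margS_SU (p : {ffun S * U -> R}) (s : S) : R := \sum_(u : U) p (s, u).
Definition margZS (q : {ffun Z * S * U -> R}) : {ffun Z * S -> R} :=
  [ffun zs => \sum_(u : U) q (zs.1, zs.2, u)].
Definition margSU (q : {ffun Z * S * U -> R}) : {ffun S * U -> R} :=
  [ffun su => \sum_(z : Z) q (z, su.1, su.2)].

Definition Pstar (pZS : {ffun Z * S -> R}) (pSU : {ffun S * U -> R})
  : {ffun Z * S * U -> R} :=
  [ffun x => let: (z, s, u) := x in
     if margS_ZS pZS s == 0 then 0
     else pZS (z, s) / margS_ZS pZS s * pSU (s, u)].

Definition sup_dist (T : finType) (p q : {ffun T -> R}) : R :=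
  \big[Num.max/0]_(t : T) `|p t - q t|.

Definition setA (n : nat) (pZS : {ffun Z * S -> R}) (pSU : {ffun S * U -> R})
  (q : {ffun Z * S * U -> R}) : Prop :=
  [/\ is_type n q, margZS q = pZS, margSU q = pSU &
      sup_dist q (Pstar pZS pSU) <= 1 / n%:R].
End Defs.

Definition in_conv_hull (R : realFieldType) (T : finType)
  (A : {ffun T -> R} -> Prop) (x : {ffun T -> R}) : Prop :=
  exists (m : nat) (w : 'I_m -> R) (q : 'I_m -> {ffun T -> R}),
    [/\ forall i, 0 <= w i, \sum_(i < m) w i = 1, forall i, A (q i) &
        forall t, x t = \sum_(i < m) w i * q i t].

(* Main.v *)
Require Import Defs.
From HB Require Import structures.
From mathcomp Require Import all_boot all_order all_algebra.
From mathcomp Require Import ring lra zify.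
Import Order.TTheory GRing.Theory Num.Theory.
Local Open Scope ring_scope.
Section Hull.
Variable R : realFieldType.
Variable T : finType.
Variable P : (T -> R) -> Prop.

Fixpoint allw (l : seq (R * (T -> R))) : Prop :=
  match l with [::] => True | p :: l' => (0 <= p.1 /\ P p.2) /\ allw l' end.

Definition hull (M : T -> R) := exists l : seq (R * (T -> R)),
  [/\ allw l, \sum_(p <- l) p.1 = 1 & forall t, M t = \sum_(p <- l) p.1 * p.2 t].

Lemma allw_cat l1 l2 : allw l1 -> allw l2 -> allw (l1 ++ l2).
Proof. by elim: l1 => //= p l IH [[h1 h2] h3] h4; split => //; apply: IH. Qed.

Lemma allw_scale c l : 0 <= c -> allw l -> allw (map (fun p => (c * p.1, p.2)) l).
Proof.
move=> hc; elim: l => //= p l IH [[h1 h2] h3]; split; last exact: IH.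
by split => //; apply: mulr_ge0.
Qed.

Lemma hull1 M : P M -> hull M.
Proof.
move=> hM; exists [:: (1, M)]; split => /=; first by [].
  by rewrite big_seq1.
by move=> t; rewrite big_seq1 mul1r.
Qed.

Lemma hull_comb M M1 M2 c : 0 <= c <= 1 -> hull M1 -> hull M2 ->
  (forall t, M t = c * M1 t + (1 - c) * M2 t) -> hull M.
Proof.
move=> /andP [c0 c1] [l1 [a1 s1 e1]] [l2 [a2 s2 e2]] eM.
exists (map (fun p => (c * p.1, p.2)) l1 ++ map (fun p => ((1 - c) * p.1, p.2)) l2).
split.
- apply: allw_cat; apply: allw_scale => //; lra.
- by rewrite big_cat !big_map /= -!mulr_sumr s1 s2 !mulr1 addrC subrK.
- move=> t; rewrite eM big_cat !big_map /= e1 e2 !mulr_sumr.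
  by congr (_ + _); apply: eq_bigr => p _; rewrite mulrA.
Qed.
End Hull.
Arguments hull {R T} P M.
Arguments allw {R T} P l.
Arguments hull1 {R T P} M.
Arguments hull_comb {R T P} M M1 M2 c.


Definition isint {R : realFieldType} (x : R) := exists k : int, x = k%:~R.

Lemma isint_sum (R : realFieldType) (I : Type) (s : seq I) (Pr : pred I) (f : I -> R) :
  (forall i, Pr i -> isint (f i)) -> isint (\sum_(i <- s | Pr i) f i).
Proof.
move=> h; apply: (big_ind (@isint R)) => //.
  by exists 0; rewrite mulr0z.
by move=> x y [a ->] [b ->]; exists (a + b); rewrite intrD.
Qed.
Lemma kernel_exists (R : fieldType) (T E : finType) (c : E -> T -> R) :
  (#|E| < #|T|)%N ->
  exists v : T -> R, (exists t, v t != 0) /\ forall e, \sum_t c e t * v t = 0.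
Proof.
move=> hlt.
pose Mx : 'M[R]_(#|T|, #|E|) := \matrix_(i, j) c (enum_val j) (enum_val i).
pose K := kermx Mx.
have hK : K != 0.
  rewrite -mxrank_eq0 /K mxrank_ker -lt0n subn_gt0.
  exact: leq_ltn_trans (rank_leq_col Mx) hlt.
have [i [j hij]] : exists i j, K i j != 0.
  case: (boolP [exists i, exists j, K i j != 0]).
    by move=> /existsP [i /existsP [j h]]; exists i, j.
  move=> hn; case/negP: hK; apply/eqP/matrixP => i j; apply/eqP; rewrite [X in _ == X]mxE.
  apply/negPn; apply: contra hn => h; apply/existsP; exists i; apply/existsP; by exists j.
exists (fun t => K i (enum_rank t)); split.
  by exists (enum_val j); rewrite enum_valK.
move=> e.
have h0 : (K *m Mx) i (enum_rank e) = 0 by rewrite mulmx_ker mxE.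
clearbody K.
transitivity ((K *m Mx) i (enum_rank e)); last exact: h0.
rewrite mxE (reindex enum_rank) /=; last by apply: onW_bij; exact: enum_rank_bij.
apply: eq_bigr => t _; rewrite mxE !enum_rankK mulrC //.
Qed.

Section Gen.
Variable R : realFieldType.
Variables (T A B : finType) (row : T -> A) (col : T -> B).
Variable lo : T -> int.
Variable r : A + B -> R.
Hypothesis rint : forall e, isint (r e).

Definition key (t : T) (e : A + B) : bool :=
  match e with inl a => row t == a | inr b => col t == b end.
Definition marg (M : T -> R) e := \sum_(t | key t e) M t.
Definition box (M : T -> R) := forall t, (lo t)%:~R <= M t <= (lo t)%:~R + 1.
Definition good (N : T -> R) :=
  [/\ forall t, isint (N t), box N & forall e, marg N e = r e].
Definition Fr (M : T -> R) : {set T} :=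
  [set t | ((lo t)%:~R < M t) && (M t < (lo t)%:~R + 1)].

Lemma notF_int M t : box M -> t \notin Fr M -> isint (M t).
Proof.
move=> /(_ t) /andP [h1 h2]; rewrite inE negb_and -!leNgt => /orP [h|h].
  by exists (lo t); apply/eqP; rewrite eq_le h h1.
by exists (lo t + 1); rewrite intrD; apply/eqP; rewrite eq_le h h2.
Qed.

Lemma cnt2 M e : box M -> (forall e, isint (marg M e)) ->
  (exists2 t, t \in Fr M & key t e) ->
  (2 <= #|[set t in Fr M | key t e]|)%N.
Proof.
move=> hb hm [t1 ht1 hk1].
have h0 : (0 < #|[set t in Fr M | key t e]|)%N.
  by apply/card_gt0P; exists t1; rewrite inE ht1.
rewrite leqNgt; apply/negP => hlt.
have /cards1P [t0 h1] : #|[set t in Fr M | key t e]| == 1%N by lia.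
have : t0 \in [set t in Fr M | key t e] by rewrite h1 set11.
rewrite inE => /andP [hF0 hk0].
have hrest : isint (\sum_(t | key t e && (t != t0)) M t).
  apply: isint_sum => t /andP [hk hne]; apply: notF_int => //.
  apply/negP => hF; have : t \in [set t in Fr M | key t e] by rewrite inE hF hk.
  by rewrite h1 inE (negbTE hne).
have [k hk] := hm e; move: hk; rewrite /marg (bigD1 t0) //=.
case: hrest => k2 -> hk.
have hM : M t0 = (k - k2)%:~R by rewrite intrB -hk addrK.
have e1 : (lo t0)%:~R + 1 = (lo t0 + 1)%:~R :> R by rewrite intrD.
move: hF0; rewrite inE hM e1 !ltr_int; lia.
Qed.

Lemma sum_key t : (\sum_e (key t e : nat) = 2)%N.
Proof.
rewrite big_sumType /=.
have h1 : forall (X : finType) (x : X), (\sum_(y : X) (x == y : nat) = 1)%N.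
  move=> X x; rewrite (eq_bigr (fun y => if y == x then 1%N else 0%N)).
    by rewrite -big_mkcond big_pred1_eq.
  by move=> y _; rewrite eq_sym; case: (y == x).
by rewrite !h1.
Qed.

Lemma dir_exists M : box M -> (forall e, isint (marg M e)) -> (0 < #|Fr M|)%N ->
  exists v : T -> R, [/\ exists t, v t != 0, forall t, t \notin Fr M -> v t = 0
                       & forall e, marg v e = 0].
Proof.
move=> hb hm /card_gt0P [t1 ht1].
pose a0 := row t1.
pose Et := [set e | [exists t in Fr M, key t e]].
pose E' := Et :\ inl a0.
have hsum : (\sum_(e in Et) #|[set t in Fr M | key t e]| = 2 * #|Fr M|)%N.
  transitivity (\sum_e #|[set t in Fr M | key t e]|)%N.
    rewrite [RHS](bigID (fun e => e \in Et)) /= [X in _ = (_ + X)%N]big1 ?addn0 //.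
    move=> e; rewrite inE => hn; apply/eqP; rewrite cards_eq0; apply/eqP/setP => t.
    rewrite !inE; apply: contraNF hn => /andP [h1 h2]; apply/existsP; exists t.
    by rewrite inE h1.
  rewrite (eq_bigr (fun e => \sum_t ((t \in Fr M) * key t e)%N)); last first.
    move=> e _; rewrite -sum1_card big_mkcond /=; apply: eq_bigr => t _.
    by rewrite inE; case: (t \in Fr M); case: (key t e).
  rewrite exchange_big /= (eq_bigr (fun t => ((t \in Fr M) * 2)%N)); last first.
    by move=> t _; rewrite -big_distrr /= sum_key.
  rewrite -big_distrl /= mulnC -sum1_card [in RHS]big_mkcond /=; congr (_ * _)%N.
  have hle : (#|Et| <= #|Fr M|)%N.
  have : (\sum_(e in Et) 2 <= \sum_(e in Et) #|[set t in Fr M | key t e]|)%N.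
    apply: leq_sum => e he; move: (he); rewrite inE => /existsP [t /andP [h1 h2]].
    have := @cnt2 M e hb hm; apply; by exists t.
  by rewrite hsum sum_nat_const mulnC leq_pmul2l.
have hin : inl a0 \in Et by rewrite inE; apply/existsP; exists t1; rewrite ht1 /= eqxx.
have hE' : (#|E'| < #|Fr M|)%N by move: hle; rewrite /E' (cardsD1 (inl a0) Et) hin add1n.
pose Eq := ({e | e \in E'} + {t | t \notin Fr M})%type.
have hc : (#|{: Eq}| < #|T|)%N.
  rewrite card_sum !card_sig -(cardsC (Fr M)).
  have -> : #|[pred x | x \in E']| = #|E'| by apply: eq_card.
  have -> : #|[pred x | x \notin Fr M]| = #|~: Fr M| by apply: eq_card => x; rewrite in_setC.
  by rewrite ltn_add2r.
pose c (q : Eq) (t : T) : R :=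
  match q with inl e => (key t (val e))%:R | inr t' => (t == val t')%:R end.
have [v [[t2 ht2] hv]] := @kernel_exists R T Eq c hc.
have hsupp : forall t, t \notin Fr M -> v t = 0.
  move=> t ht; have := hv (inr (exist _ t ht)); rewrite /c /=.
  rewrite (eq_bigr (fun t' => if t' == t then v t' else 0)); last first.
    by move=> t' _; case: (t' == t); rewrite ?mul1r ?mul0r.
  by rewrite -big_mkcond big_pred1_eq.
have hE'm : forall e, e \in E' -> marg v e = 0.
  move=> e he; rewrite /marg.
  transitivity (\sum_t c (inl (exist _ e he)) t * v t); last exact: hv.
  rewrite big_mkcond /=; apply: eq_bigr => t _.
  by case: (key t e); rewrite ?mul1r ?mul0r.
have hne : forall e, e != inl a0 -> marg v e = 0.
  move=> e hne; case: (boolP (e \in Et)) => hEt.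
    by apply: hE'm; rewrite /E' in_setD1 hne hEt.
  rewrite /marg big1 // => t hk; apply: hsupp; apply: contraNN hEt => hF.
  by rewrite inE; apply/existsP; exists t; rewrite hF.
have hall : forall e, marg v e = 0.
  move=> e; case: (eqVneq e (inl a0)) => [->|]; last exact: hne.
  have htot : \sum_t v t = 0.
    rewrite (partition_big col predT) //= big1 // => b _.
    exact: (hne (inr b)).
  move: htot; rewrite (partition_big row predT) //= (bigD1 a0) //=.
  rewrite [X in _ + X]big1 ?addr0 //.
  by move=> a ha; exact: (hne (inl a)).
by exists v; split => //; exists t2.
Qed.

Lemma step M v : box M -> (exists t, v t != 0) -> (forall t, t \notin Fr M -> v t = 0) ->
  exists2 al, 0 < al &
    box (fun t => M t + al * v t) /\ Fr (fun t => M t + al * v t) \proper Fr M.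
Proof.
move=> hb [t2 ht2] hs.
pose up t := if 0 < v t then ((lo t)%:~R + 1 - M t) / v t else ((lo t)%:~R - M t) / v t.
case: (@arg_minP _ _ T t2 (fun t => v t != 0) up ht2) => tu hvu hmin.
have inF : forall t, v t != 0 -> t \in Fr M.
  move=> t hv0; case: (boolP (t \in Fr M)) => // h.
  by rewrite (hs _ h) eqxx in hv0.
have hFu := inF _ hvu.
exists (up tu).
  rewrite /up; move: hFu; rewrite inE => /andP[h1 h2]; case: ifP => hp.
    by apply: divr_gt0 => //; lra.
  have hn : v tu < 0 by rewrite lt_neqAle hvu /= leNgt hp.
  rewrite -mulrNN -invrN; apply: divr_gt0; lra.
split.
  move=> t /=; case: (eqVneq (v t) 0) => hv0.
    by rewrite hv0 mulr0 addr0; exact: hb.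
  have hm : up tu <= up t := hmin t hv0.
  have hal : 0 < up tu.
    rewrite /up; move: hFu; rewrite inE => /andP[h1 h2]; case: ifP => hp.
      by apply: divr_gt0 => //; lra.
    have hn : v tu < 0 by rewrite lt_neqAle hvu /= leNgt hp.
    rewrite -mulrNN -invrN; apply: divr_gt0; lra.
  move: (hb t) => /andP[h1 h2].
  move: hm; rewrite {2}/up; case: ifP => hp hm.
    have e1 : up tu * v t <= (lo t)%:~R + 1 - M t.
      rewrite -[X in _ <= X](divfK hv0); apply: ler_wpM2r => //; exact: ltW.
    have e2 : 0 <= up tu * v t by apply: mulr_ge0; apply: ltW.
    apply/andP; split; lra.
  have hn : v t <= 0 by rewrite leNgt hp.
  have e1 : ((lo t)%:~R - M t) <= up tu * v t.
    rewrite -[X in X <= _](divfK hv0); exact: ler_wnM2r.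
  have e2 : up tu * v t <= 0 by apply: mulr_ge0_le0 => //; apply: ltW.
  apply/andP; split; lra.
apply/properP; split.
  apply/subsetP => t; apply: contraTT => hnF.
  by rewrite inE /= hs // mulr0 addr0; move: hnF; rewrite inE.
exists tu => //.
rewrite inE /= /up; case: ifP => hp; rewrite divfK //; apply/negP => /andP [x y]; lra.
Qed.

Lemma base M : (#|Fr M| <= 0)%N -> box M -> (forall e, marg M e = r e) -> good M.
Proof.
move=> hk hb hm; split => // t; apply: notF_int => //.
have -> : Fr M = set0 by apply/eqP; rewrite -cards_eq0 -leqn0.
by rewrite in_set0.
Qed.

Lemma main k M : (#|Fr M| <= k)%N -> box M -> (forall e, marg M e = r e) -> hull good M.
Proof.
elim: k M => [|k IH] M hk hb hm; first by apply: hull1; apply: base.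
case: (posnP #|Fr M|) => hF.
  by apply: hull1; apply: base => //; rewrite hF.
have hmi : forall e, isint (marg M e) by move=> e; rewrite hm.
have [v [[t0 hnz] hs hmv]] := @dir_exists M hb hmi hF.
have [al hal [hb1 hp1]] := @step M v hb (ex_intro _ t0 hnz) hs.
have hnz' : - v t0 != 0 by rewrite oppr_eq0.
have hs' : forall t, t \notin Fr M -> - v t = 0 by move=> t h; rewrite hs // oppr0.
have [be hbe [hb2 hp2]] := @step M (fun t => - v t) hb (ex_intro _ t0 hnz') hs'.
have hmarg : forall c (w : T -> R), (forall e, marg w e = 0) ->
    forall e, marg (fun t => M t + c * w t) e = r e.
  move=> c w hw e; rewrite /marg big_split /= -mulr_sumr.
  by rewrite -/(marg M e) -/(marg w e) hm hw mulr0 addr0.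
apply: (hull_comb M (fun t => M t + al * v t) (fun t => M t + be * - v t) (be / (al + be))).
- apply/andP; split; first by apply: divr_ge0; lra.
  by rewrite ler_pdivrMr ?mul1r; lra.
- apply: IH => //; last exact: (hmarg al v hmv).
  by have := proper_card hp1; lia.
- apply: IH => //; last first.
    by apply: (hmarg be (fun t => - v t)) => e; rewrite /marg sumrN -/(marg v e) hmv oppr0.
  by have := proper_card hp2; lia.
- move=> t /=.
  have hne : al + be != 0 by apply: lt0r_neq0; lra.
  field; exact: hne.
Qed.
End Gen.

Lemma allw_nth (R : realFieldType) (T : finType) (P : (T -> R) -> Prop) l d i :
  allw P l -> (i < size l)%N -> 0 <= (nth d l i).1 /\ P (nth d l i).2.
Proof.
elim: l i => [|p l IH] [|i] //= [h1 h2] hi; first exact: h1.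
exact: IH.
Qed.

Lemma sum_row (R : realFieldType) (Z S U : finType) (f : Z * S * U -> R) zs :
  \sum_(t | t.1 == zs) f t = \sum_u f (zs, u).
Proof.
rewrite -(@big_pred1_eq R 0 +%R _ zs (fun x => \sum_u f (x, u))) pair_big_dep.
by apply: eq_big => [[x u]|[x u] _] //=; rewrite andbT.
Qed.

Lemma sum_col (R : realFieldType) (Z S U : finType) (f : Z * S * U -> R) s u :
  \sum_(t | (t.1.2, t.2) == (s, u)) f t = \sum_z f (z, s, u).
Proof.
have -> : \sum_(t | (t.1.2, t.2) == (s, u)) f t =
          \sum_(x | x.2 == s) \sum_(u' | u' == u) f (x, u').
  by rewrite pair_big_dep; apply: eq_big => [[x u']|[x u'] _] //=; rewrite xpair_eqE.
rewrite (eq_bigr (fun x => f (x, u))); last by move=> x _; rewrite big_pred1_eq.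
have -> : \sum_(x | x.2 == s) f (x, u) = \sum_z \sum_(s' | s' == s) f (z, s', u).
  by rewrite pair_big_dep; apply: eq_big => [[x s']|[x s'] _] //=.
by apply: eq_bigr => z _; rewrite big_pred1_eq.
Qed.

Theorem lemma8 (R : realFieldType) (Z S U : finType) (n : nat) (n_gt0 : (0 < n)%N)
  (pZS : {ffun Z * S -> R}) (pSU : {ffun S * U -> R}) :
  is_type n pZS -> is_type n pSU ->
  (forall s, margS_ZS pZS s = margS_SU pSU s) ->
  in_conv_hull (setA n pZS pSU) (Pstar pZS pSU).
Proof.
move=> [hZ sZ] [hU sU] hmS.
have [kZ hkZ] := fin_all_exists hZ.
have [kU hkU] := fin_all_exists hU.
pose nR : R := n%:R.
have hn : nR != 0 by rewrite pnatr_eq0 -lt0n.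
have hnp : 0 < nR by rewrite ltr0n.
pose K s := (\sum_z kZ (z, s))%N.
have hmZ : forall s, margS_ZS pZS s = (K s)%:R / nR.
  by move=> s; rewrite /margS_ZS /K natr_sum mulr_suml; apply: eq_bigr => z _; rewrite hkZ.
have hK : forall s, (\sum_u kU (s, u))%N = K s.
  move=> s; apply/eqP; rewrite -(eqr_nat R); apply/eqP.
  apply: (mulIf (invr_neq0 hn)); rewrite -hmZ hmS /margS_SU natr_sum mulr_suml.
  by apply: eq_bigr => u _; rewrite hkU.
have hsZ : \sum_t (kZ t)%:R = nR.
  transitivity ((\sum_t pZS t) * nR); last by rewrite sZ mul1r.
  by rewrite mulr_suml; apply: eq_bigr => t _; rewrite hkZ divfK.
pose row (t : Z * S * U) := t.1.
pose col (t : Z * S * U) := (t.1.2, t.2).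
pose lo (t : Z * S * U) : int := ((kZ t.1 * kU (t.1.2, t.2)) %/ K t.1.2)%N.
pose r (e : (Z * S) + (S * U)) : R :=
  match e with inl zs => (kZ zs)%:R | inr su => (kU su)%:R end.
pose M (t : Z * S * U) : R := nR * Pstar pZS pSU t.
have hM : forall z s u, M (z, s, u) =
    if K s == 0%N then 0 else (kZ (z, s) * kU (s, u))%:R / (K s)%:R.
  move=> z s u; rewrite /M ffunE /= hmZ.
  case: (eqVneq (K s) 0%N) => hKs.
    by rewrite hKs mulr0n mul0r eqxx mulr0.
  have hKs' : (K s)%:R != 0 :> R by rewrite pnatr_eq0.
  rewrite mulf_eq0 (negbTE hKs') invr_eq0 (negbTE hn) /= hkZ hkU natrM.
  by field; rewrite hKs' hn.
have rint : forall e, isint (r e).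
  by case=> [zs|su]; [exists (kZ zs : int) | exists (kU su : int)].
have hbox : box R _ lo M.
  move=> [[z s] u]; rewrite hM /lo /=.
  case: (eqVneq (K s) 0%N) => hKs.
    by rewrite hKs divn0 /= mulr0z add0r lexx ler01.
  set m := (kZ (z, s) * kU (s, u))%N.
  have hd : 0 < (K s)%:R :> R by rewrite ltr0n lt0n.
  have -> : (((m %/ K s)%N : int)%:~R : R) = (m %/ K s)%:R by [].
  rewrite {2 3}(divn_eq m (K s)) natrD natrM mulrDl mulfK ?lt0r_neq0 //.
  have h1 : 0 <= (m %% K s)%:R / (K s)%:R :> R by apply: divr_ge0.
  have h2 : (m %% K s)%:R / (K s)%:R <= 1 :> R.
    by rewrite ler_pdivrMr // mul1r ler_nat ltnW // ltn_pmod // lt0n.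
  apply/andP; split; lra.
have hK0 : forall s, K s = 0%N -> (forall z, kZ (z, s) = 0%N) /\ (forall u, kU (s, u) = 0%N).
  move=> s hKs; split.
    by move=> z; move/eqP: hKs; rewrite /K sum_nat_eq0 => /forallP /(_ z) /eqP.
  by move=> u; move/eqP: hKs; rewrite -hK sum_nat_eq0 => /forallP /(_ u) /eqP.
have hmarg : forall e, marg R _ _ _ row col M e = r e.
  case=> [[z s]|[s u]].
  - rewrite /marg /key /row /= (@sum_row R _ _ _ M (z, s)) /=.
    under eq_bigr do rewrite hM.
    case: (eqVneq (K s) 0%N) => hKs.
      by rewrite big1 // (hK0 _ hKs).1.
    have hKs' : (K s)%:R != 0 :> R by rewrite pnatr_eq0.
    rewrite (eq_bigr (fun u => (kZ (z, s))%:R / (K s)%:R * (kU (s, u))%:R)); last first.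
      by move=> u _; rewrite ?(negbTE hKs) natrM mulrAC.
    by rewrite -mulr_sumr -natr_sum hK mulfVK.
  - rewrite /marg /key /col /= (@sum_col R _ _ _ M s u) /=.
    under eq_bigr do rewrite hM.
    case: (eqVneq (K s) 0%N) => hKs.
      by rewrite big1 // (hK0 _ hKs).2.
    have hKs' : (K s)%:R != 0 :> R by rewrite pnatr_eq0.
    rewrite (eq_bigr (fun z => (kZ (z, s))%:R * ((kU (s, u))%:R / (K s)%:R))); last first.
      by move=> z _; rewrite ?(negbTE hKs) natrM mulrA.
    by rewrite -mulr_suml -natr_sum -/(K s) mulrC mulfVK.
have [l [hl hsum hMl]] := @main R _ _ _ row col lo r rint _ M (leqnn _) hbox hmarg.
have hP : forall t, Pstar pZS pSU t = M t / nR by move=> t; rewrite /M [nR * _]mulrC mulfK.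
pose d := (0 : R, M).
exists (size l), (fun i => (nth d l i).1), (fun i => [ffun t => (nth d l i).2 t / nR]).
split.
- by move=> i; exact: (@allw_nth R _ _ l d i hl (ltn_ord i)).1.
- by rewrite -hsum (big_nth d) big_mkord.
- move=> i; have [_ hg] := @allw_nth R _ _ l d i hl (ltn_ord i).
  move: hg; set N := (nth d l i).2 => -[hint hbN hmN].
  split.
  + split.
    * move=> t; rewrite ffunE; have [k hk] := hint t.
      have h0 : (0 <= k)%R.
        have := hbN t; rewrite hk => /andP [h1 _]; move: h1; rewrite ler_int.
        by apply: le_trans.
      by case: k hk h0 => m // hk _; exists m; rewrite hk.
    * under eq_bigr do rewrite ffunE.
      rewrite -mulr_suml (partition_big row predT) //=.
      rewrite (eq_bigr (fun zs => (kZ zs)%:R)) ?hsZ ?mulfV //.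
      by move=> zs _; have := hmN (inl zs); rewrite /marg /key.
  + apply/ffunP => -[z s]; rewrite !ffunE /=.
    under eq_bigr do rewrite ffunE.
    rewrite -mulr_suml hkZ; congr (_ / _).
    by have := hmN (inl (z, s)); rewrite /marg /key /row /= (@sum_row R _ _ _ N (z, s)).
  + apply/ffunP => -[s u]; rewrite !ffunE /=.
    under eq_bigr do rewrite ffunE.
    rewrite -mulr_suml hkU; congr (_ / _).
    by have := hmN (inr (s, u)); rewrite /marg /key /col /= (@sum_col R _ _ _ N s u).
  + rewrite /sup_dist; apply: bigmax_le => [|t _].
      by rewrite divr_ge0 ?ler01 ?ler0n.
    have hi : 0 <= nR^-1 by rewrite invr_ge0 ltW.
    rewrite ffunE hP -mulrBl normrM (ger0_norm hi).
    apply: ler_wpM2r => //.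
    have := hbN t; have := hbox t; move=> /andP [a1 a2] /andP [b1 b2].
    rewrite ler_norml; apply/andP; split; lra.
- move=> t; rewrite hP hMl (big_nth d) big_mkord mulr_suml.
  by apply: eq_bigr => i _; rewrite ffunE mulrA.
Qed.
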